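(* Let $\boldsymbol\pi\in\Delta^{d-1}$ and $1\le k\le d-1$. Then $$\min_{\mathbf X\in\mathcal D_k}H(\mathbf X\boldsymbol\pi)=H(\boldsymbol\pi^{(k)}).$$
   Context: $H(\mathbf x)=-\sum_r x_r\log x_r$ (with $0\log0=0$). $\mathcal D_k$ is the set of matrices $\mathbf X\in\{0,1\}^{k\times d}$ in which every column has exactly one nonzero entry and every row has at least one nonzero entry. With $\pi_{[1]}\ge\pi_{[2]}\ge\dots\ge\pi_{[d]}$ the entries of $\boldsymbol\pi$ in decreasing order, $\boldsymbol\pi^{(k)}\in\Delta^{k-1}$ is defined by $\pi^{(k)}_1=\sum_{r=1}^{d-k+1}\pi_{[r]}$ and $\pi^{(k)}_l=\pi_{[d-k+l]}$ for $2\le l\le k$ (if $k\ge2$). *)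

(* Defs.v *)
From Stdlib Require Import Reals List.
Import ListNotations.
Open Scope R_scope.

Definition xlogx (x : R) : R := if Req_EM_T x 0 then 0 else x * ln x.

Definition entropy (x : list R) : R := - fold_right Rplus 0 (map xlogx x).

Definition lsum (x : list R) : R := fold_right Rplus 0 x.

Fixpoint insert_desc (a : R) (l : list R) : list R :=
  match l with
  | [] => [a]
  | b :: t => if Rle_dec b a then a :: b :: t else b :: insert_desc a t
  end.

Fixpoint sort_desc (l : list R) : list R :=
  match l with
  | [] => []
  | a :: t => insert_desc a (sort_desc t)
  end.

Definition in_simplex (d : nat) (p : list R) : Prop :=
  length p = d /\ Forall (fun x => 0 <= x) p /\ lsum p = 1.

Definition in_Dk (k d : nat) (X : nat -> nat -> R) : Prop :=
  (forall r j, (r < k)%nat -> (j < d)%nat -> X r j = 0 \/ X r j = 1) /\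
  (forall j, (j < d)%nat ->
     exists r, (r < k)%nat /\ X r j <> 0 /\
       forall r', (r' < k)%nat -> r' <> r -> X r' j = 0) /\
  (forall r, (r < k)%nat -> exists j, (j < d)%nat /\ X r j <> 0).

Definition matvec (k d : nat) (X : nat -> nat -> R) (p : list R) : list R :=
  map (fun r => lsum (map (fun j => X r j * nth j p 0) (seq 0 d))) (seq 0 k).

Definition pi_k (k : nat) (p : list R) : list R :=
  let s := sort_desc p in
  let m := (length p - k + 1)%nat in
  lsum (firstn m s) :: skipn m s.

(* Main.v *)
Require Import Defs.
From Stdlib Require Import Reals List Sorting Permutation Lia Lra.
Import ListNotations.
Open Scope R_scope.

Lemma LN y : 0 < y -> ln y <= y - 1.
Proof. intros H. pose proof (exp_ineq1_le (ln y)). rewrite exp_ln in H0; lra. Qed.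

Lemma ln_le' x y : 0 < x -> x <= y -> ln x <= ln y.
Proof. intros H1 H2. destruct (Req_dec x y). subst; lra. left; apply ln_increasing; lra. Qed.

Lemma xlogx_pos x : 0 < x -> xlogx x = x * ln x.
Proof. intros H; unfold xlogx; destruct (Req_EM_T x 0); [lra|auto]. Qed.

Lemma xlogx_0 : xlogx 0 = 0.
Proof. unfold xlogx; destruct (Req_EM_T 0 0); [auto|lra]. Qed.

Lemma T1 a b : 0 < a -> 0 < b -> (b - a) * (1 + ln a) <= b * ln b - a * ln a.
Proof.
  intros Ha Hb.
  assert (E : ln a = ln b + ln (a / b)).
  { rewrite <- ln_mult by (try apply Rdiv_lt_0_compat; lra). f_equal; field; lra. }
  pose proof (LN (a/b) ltac:(apply Rdiv_lt_0_compat; lra)) as L.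
  assert (b * ln (a/b) <= a - b).
  { apply Rle_trans with (b * (a/b - 1)). apply Rmult_le_compat_l; lra.
    right; field; lra. }
  rewrite E. nra.
Qed.

Lemma INC w U x : 0 <= w -> w <= U -> 0 <= x ->
  xlogx (w + x) - xlogx w <= xlogx (U + x) - xlogx U.
Proof.
  intros Hw HU Hx.
  destruct (Req_dec x 0) as [->|Hx0]. rewrite !Rplus_0_r; lra.
  destruct (Req_dec w U) as [->|HwU]. lra.
  assert (Hx' : 0 < x) by lra. assert (HU' : 0 < U) by lra.
  destruct (Req_dec w 0) as [->|Hw0].
  - rewrite Rplus_0_l, xlogx_0, !xlogx_pos by lra.
    pose proof (ln_le' x (U+x) ltac:(lra) ltac:(lra)).
    pose proof (ln_le' U (U+x) ltac:(lra) ltac:(lra)).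
    nra.
  - assert (Hw' : 0 < w) by lra.
    rewrite !xlogx_pos by lra.
    destruct (Rle_dec (w + x) U).
    + pose proof (T1 U (U+x) ltac:(lra) ltac:(lra)).
      pose proof (T1 (w+x) w ltac:(lra) ltac:(lra)).
      pose proof (ln_le' (w+x) U ltac:(lra) ltac:(lra)).
      nra.
    + pose proof (T1 (w+x) (U+x) ltac:(lra) ltac:(lra)).
      pose proof (T1 U w ltac:(lra) ltac:(lra)).
      pose proof (ln_le' U (w+x) ltac:(lra) ltac:(lra)).
      nra.
Qed.

Lemma lsum_app a b : lsum (a ++ b) = lsum a + lsum b.
Proof. induction a; simpl; [lra|]. unfold lsum in *; simpl; rewrite IHa; lra. Qed.

Lemma lsum_perm a b : Permutation a b -> lsum a = lsum b.
Proof. induction 1; unfold lsum in *; simpl; try lra. Qed.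

Lemma lsum_nonneg l : Forall (fun v => 0 <= v) l -> 0 <= lsum l.
Proof. induction 1; unfold lsum in *; simpl; lra. Qed.

Definition gs (r : nat) (L : list (nat * R)) : R :=
  lsum (map (fun a => if Nat.eqb (fst a) r then snd a else 0) L).

Lemma gs_cons r a L : gs r (a :: L) = (if Nat.eqb (fst a) r then snd a else 0) + gs r L.
Proof. reflexivity. Qed.

Lemma gs_app r A B : gs r (A ++ B) = gs r A + gs r B.
Proof. unfold gs; rewrite map_app, lsum_app; auto. Qed.

Lemma gs_perm r A B : Permutation A B -> gs r A = gs r B.
Proof. intros; unfold gs; apply lsum_perm, Permutation_map; auto. Qed.

Lemma gs_notin r L : ~ In r (map fst L) -> gs r L = 0.
Proof.
  induction L as [|a L IH]; intros H. reflexivity.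
  rewrite gs_cons. simpl in H. destruct (Nat.eqb_spec (fst a) r). tauto.
  rewrite IH; [lra|tauto].
Qed.

Lemma gs_le r L : Forall (fun v => 0 <= v) (map snd L) -> gs r L <= lsum (map snd L).
Proof.
  induction L as [|a L IH]; intros H. unfold gs, lsum; simpl; lra.
  rewrite gs_cons. simpl in H. inversion H; subst.
  change (lsum (map snd (a :: L))) with (snd a + lsum (map snd L)).
  specialize (IH H3). destruct (Nat.eqb (fst a) r); lra.
Qed.

Definition SF (R0 : list nat) (L : list (nat * R)) : R :=
  lsum (map (fun r => xlogx (gs r L)) R0).

Lemma SF_split R1 l R2 L : SF (R1 ++ l :: R2) L = xlogx (gs l L) + SF (R1 ++ R2) L.
Proof. unfold SF; rewrite !map_app, !lsum_app; unfold lsum; simpl; lra. Qed.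

Lemma skipn_nth (l : list R) j : (j < length l)%nat -> skipn j l = nth j l 0 :: skipn (S j) l.
Proof.
  revert j; induction l; intros j H; simpl in H. lia.
  destruct j. reflexivity. simpl. apply IHl; lia.
Qed.

Lemma firstn_nth (l : list R) j : (j < length l)%nat -> firstn (S j) l = firstn j l ++ [nth j l 0].
Proof.
  revert j; induction l; intros j H; simpl in H. lia.
  destruct j. reflexivity. change (firstn (S (S j)) (a :: l)) with (a :: firstn (S j) l).
  rewrite IHl by lia. reflexivity.
Qed.

Lemma SF_ext R0 L L' : (forall r, In r R0 -> gs r L = gs r L') -> SF R0 L = SF R0 L'.
Proof. intros H; unfold SF; f_equal; apply map_ext_in; intros; rewrite H; auto. Qed.

Lemma len_labels (L : list (nat*R)) R0 : NoDup R0 -> (forall r, In r R0 -> In r (map fst L)) ->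
  (length R0 <= length L)%nat.
Proof.
  intros H1 H2. rewrite <- (length_map fst L). apply NoDup_incl_length; auto.
Qed.

Lemma in_mid_rm (r l0 : nat) R1 R2 : In r (R1 ++ l0 :: R2) -> r <> l0 -> In r (R1 ++ R2).
Proof. intros H Hn. apply in_app_or in H. apply in_or_app. destruct H as [H|[H|H]]; auto. congruence. Qed.

Lemma in_mid_add (r l0 : nat) R1 R2 : In r (R1 ++ R2) -> In r (R1 ++ l0 :: R2).
Proof. intros H. apply in_app_or in H. apply in_or_app. simpl. tauto. Qed.

Lemma len_mid (l0 : nat) R1 R2 : length (R1 ++ l0 :: R2) = S (length (R1 ++ R2)).
Proof. rewrite !length_app; simpl; lia. Qed.

Lemma In_skipn' {A} (x : A) n l : In x (skipn n l) -> In x l.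
Proof. intros H. rewrite <- (firstn_skipn n l). apply in_or_app; auto. Qed.

Lemma In_firstn' {A} (x : A) n l : In x (firstn n l) -> In x l.
Proof. intros H. rewrite <- (firstn_skipn n l). apply in_or_app; auto. Qed.

Lemma lsum_ge_head (l : list R) x j : (j < length l)%nat -> Forall (fun v => 0 <= v) l ->
  Forall (fun v => x <= v) l -> x <= lsum (skipn j l).
Proof.
  intros Hj H0 Hx. rewrite skipn_nth by auto.
  change (lsum (nth j l 0 :: skipn (S j) l)) with (nth j l 0 + lsum (skipn (S j) l)).
  assert (In (nth j l 0) l) by (apply nth_In; auto).
  rewrite Forall_forall in H0, Hx.
  pose proof (Hx _ H). 
  assert (0 <= lsum (skipn (S j) l)).
  { apply lsum_nonneg. rewrite Forall_forall. intros v Hv. apply H0. eapply In_skipn'; eauto. }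
  lra.
Qed.

Lemma lsum_skipn_S (l : list R) j : Forall (fun v => 0 <= v) l -> lsum (skipn (S j) l) <= lsum (skipn j l).
Proof.
  revert j; induction l; intros j H. simpl. destruct j; simpl; lra.
  inversion H; subst. destruct j. simpl. unfold lsum at 2; simpl. fold (lsum l). lra.
  simpl. apply IHl; auto.
Qed.

Lemma G : forall L R0, NoDup R0 -> (forall a, In a L -> In (fst a) R0) ->
  (forall r, In r R0 -> In r (map fst L)) -> Forall (fun v => 0 <= v) (map snd L) ->
  StronglySorted Rle (map snd L) ->
  forall l, In l R0 -> gs l L <= lsum (skipn (length R0 - 1) (map snd L)).
Proof.
  induction L as [|[l0 x] L IH]; intros R0 H1 H2 H3 H4 H5 l Hl.
  - destruct (H3 l Hl).
  - simpl in H4, H5. inversion H4 as [|? ? Hx H4']; subst. inversion H5 as [|? ? H5' Hs]; subst.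
    rewrite gs_cons. simpl fst; simpl snd.
    assert (HLlen : forall R', NoDup R' -> (forall r, In r R' -> In r (map fst L)) ->
             (length R' <= length (map snd L))%nat).
    { intros R' a b. rewrite length_map. apply len_labels; auto. }
    destruct (in_dec Nat.eq_dec l0 (map fst L)) as [Hin|Hnin].
    +
      assert (H3' : forall r, In r R0 -> In r (map fst L)).
      { intros r Hr. destruct (H3 r Hr) as [E|E]; simpl in E; [subst; auto|auto]. }
      assert (IHa := IH R0 H1 (fun a Ha => H2 a (or_intror Ha)) H3' H4' H5' l Hl).
      pose proof (HLlen R0 H1 H3').
      destruct (length R0 - 1)%nat as [|j] eqn:E.
      * simpl skipn in *. change (lsum (x :: map snd L)) with (x + lsum (map snd L)).
        destruct (Nat.eqb l0 l); lra.
      * simpl skipn.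
        rewrite (skipn_nth _ j) by lia.
        change (lsum (nth j (map snd L) 0 :: skipn (S j) (map snd L)))
          with (nth j (map snd L) 0 + lsum (skipn (S j) (map snd L))).
        assert (x <= nth j (map snd L) 0).
        { rewrite Forall_forall in Hs. apply Hs, nth_In. lia. }
        destruct (Nat.eqb l0 l); lra.
    +
      assert (Hl0 : In l0 R0) by (apply (H2 (l0,x)); left; auto).
      destruct (in_split _ _ Hl0) as [R1 [R2 ER]]. subst R0.
      pose proof (NoDup_remove_1 _ _ _ H1) as N1.
      pose proof (NoDup_remove_2 _ _ _ H1) as N2.
      assert (H2' : forall a, In a L -> In (fst a) (R1 ++ R2)).
      { intros a Ha. apply (in_mid_rm _ l0). apply H2; right; auto.
        intros E. apply Hnin. rewrite <- E. apply in_map; auto. }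
      assert (H3' : forall r, In r (R1 ++ R2) -> In r (map fst L)).
      { intros r Hr. destruct (H3 r (in_mid_add _ l0 _ _ Hr)) as [E|E]; simpl in E; auto.
        subst; contradiction. }
      pose proof (HLlen _ N1 H3').
      rewrite len_mid. 
      destruct (Nat.eq_dec l l0) as [->|Hne].
      * rewrite Nat.eqb_refl, gs_notin by auto.
        destruct (length (R1 ++ R2)) as [|j] eqn:E.
        -- simpl skipn. change (lsum (x :: map snd L)) with (x + lsum (map snd L)).
           pose proof (lsum_nonneg _ H4'). lra.
        -- simpl skipn. replace (j - 0)%nat with j by lia.
           assert (x <= lsum (skipn j (map snd L))) by (apply lsum_ge_head; auto; lia). lra.
      * rewrite (proj2 (Nat.eqb_neq l0 l)) by auto.
        assert (Hl' : In l (R1 ++ R2)) by (apply (in_mid_rm _ l0); auto).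
        pose proof (IH _ N1 H2' H3' H4' H5' l Hl').
        destruct (length (R1 ++ R2)) as [|j] eqn:E.
        -- destruct (R1 ++ R2); simpl in E; [destruct Hl'|lia].
        -- simpl skipn. replace (S j - 1)%nat with j in * by lia. lra.
Qed.

Lemma gs_nonneg r L : Forall (fun v => 0 <= v) (map snd L) -> 0 <= gs r L.
Proof.
  induction L as [|a L IH]; intros H. unfold gs, lsum; simpl; lra.
  rewrite gs_cons. simpl in H. inversion H; subst. specialize (IH H3).
  destruct (Nat.eqb (fst a) r); lra.
Qed.

Lemma lsum_cons a l : lsum (a :: l) = a + lsum l.
Proof. reflexivity. Qed.

Lemma KEY : forall L R0, NoDup R0 -> (forall a, In a L -> In (fst a) R0) ->
  (forall r, In r R0 -> In r (map fst L)) -> Forall (fun v => 0 <= v) (map snd L) ->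
  StronglySorted Rle (map snd L) ->
  SF R0 L <= xlogx (lsum (skipn (length R0 - 1) (map snd L)))
             + lsum (map xlogx (firstn (length R0 - 1) (map snd L))).
Proof.
  induction L as [|[l0 x] L IH]; intros R0 H1 H2 H3 H4 H5.
  - destruct R0 as [|r R0]; [|destruct (H3 r (or_introl eq_refl))].
    unfold SF, lsum; simpl. rewrite xlogx_0; lra.
  - assert (G0 := G _ _ H1 H2 H3 H4 H5).
    simpl in H4, H5. inversion H4 as [|? ? Hx H4']; subst. inversion H5 as [|? ? H5' Hs]; subst.
    assert (Hl0 : In l0 R0) by (apply (H2 (l0,x)); left; auto).
    destruct (in_split _ _ Hl0) as [R1 [R2 ER]]. subst R0.
    pose proof (NoDup_remove_1 _ _ _ H1) as N1.
    pose proof (NoDup_remove_2 _ _ _ H1) as N2.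
    rewrite SF_split, gs_cons. simpl fst; simpl snd. rewrite Nat.eqb_refl.
    rewrite (SF_ext _ _ L).
    2:{ intros r Hr. rewrite gs_cons. simpl fst; simpl snd.
        rewrite (proj2 (Nat.eqb_neq l0 r)) by (intros E; subst; contradiction). lra. }
    rewrite len_mid. replace (S (length (R1 ++ R2)) - 1)%nat with (length (R1 ++ R2)) by lia.
    destruct (in_dec Nat.eq_dec l0 (map fst L)) as [Hin|Hnin].
    +
      assert (H3' : forall r, In r (R1 ++ l0 :: R2) -> In r (map fst L)).
      { intros r Hr. destruct (H3 r Hr) as [E|E]; simpl in E; [subst; auto|auto]. }
      assert (IHa := IH _ H1 (fun a Ha => H2 a (or_intror Ha)) H3' H4' H5').
      assert (Gw := G _ _ H1 (fun a Ha => H2 a (or_intror Ha)) H3' H4' H5' l0 Hl0).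
      pose proof (len_labels _ _ H1 H3') as HL.
      rewrite SF_split in IHa. rewrite len_mid in IHa, Gw, HL.
      replace (S (length (R1 ++ R2)) - 1)%nat with (length (R1 ++ R2)) in IHa, Gw by lia.
      pose proof (gs_nonneg l0 L H4') as Hw.
      set (w := gs l0 L) in *. set (S' := SF (R1 ++ R2) L) in *.
      destruct (length (R1 ++ R2)) as [|j] eqn:E.
      * simpl skipn in *; simpl firstn in *. rewrite lsum_cons.
        pose proof (INC w (lsum (map snd L)) x Hw Gw Hx).
        replace (x + w) with (w + x) by lra. replace (x + lsum (map snd L)) with (lsum (map snd L) + x) by lra.
        unfold lsum in *. simpl in *. unfold lsum in *. lra.
      * idtac.
        simpl skipn; simpl firstn.
        rewrite (skipn_nth _ j) by (rewrite length_map; lia).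
        rewrite (firstn_nth _ j) in IHa by (rewrite length_map; lia).
        rewrite map_app, lsum_app in IHa. simpl map. rewrite !lsum_cons in *.
        set (b := nth j (map snd L) 0) in *. set (U := lsum (skipn (S j) (map snd L))) in *.
        set (F := lsum (map xlogx (firstn j (map snd L)))) in *.
        assert (x <= b) by (rewrite Forall_forall in Hs; apply Hs, nth_In; rewrite length_map; lia).
        assert (0 <= U).
        { apply lsum_nonneg. rewrite Forall_forall in *. intros v Hv. apply H4'. eapply In_skipn'; eauto. }
        pose proof (INC w U x Hw Gw Hx).
        pose proof (INC x b U Hx H ltac:(auto)).
        idtac.
        replace (x + w) with (w + x) by lra. replace (b + U) with (U + b) in * by lra.
        replace (lsum (map xlogx [b])) with (xlogx b) in IHa by (unfold lsum; simpl; lra).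
        replace (x + U) with (U + x) in * by lra. lra.
    +
      rewrite gs_notin by auto. rewrite Rplus_0_r.
      assert (H2' : forall a, In a L -> In (fst a) (R1 ++ R2)).
      { intros a Ha. apply (in_mid_rm _ l0). apply H2; right; auto.
        intros E. apply Hnin. rewrite <- E. apply in_map; auto. }
      assert (H3' : forall r, In r (R1 ++ R2) -> In r (map fst L)).
      { intros r Hr. destruct (H3 r (in_mid_add _ l0 _ _ Hr)) as [E|E]; simpl in E; auto.
        subst; contradiction. }
      pose proof (IH _ N1 H2' H3' H4' H5') as IHa.
      destruct (length (R1 ++ R2)) as [|j] eqn:E.
      * apply length_zero_iff_nil in E. rewrite E in *.
        destruct L as [|a L]; [|destruct (H2' a (or_introl eq_refl))].
        unfold SF, lsum; simpl. rewrite Rplus_0_r. idtac.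
        rewrite !Rplus_0_r; lra.
      * replace (S j - 1)%nat with j in IHa by lia.
        simpl skipn; simpl firstn. simpl map. rewrite lsum_cons. lra.
Qed.

Fixpoint insert_p {A} (a : A * R) (l : list (A * R)) : list (A * R) :=
  match l with
  | [] => [a]
  | b :: t => if Rle_dec (snd b) (snd a) then a :: b :: t else b :: insert_p a t
  end.

Fixpoint sort_p {A} (l : list (A * R)) : list (A * R) :=
  match l with
  | [] => []
  | a :: t => insert_p a (sort_p t)
  end.

Lemma insert_p_snd {A} (a : A * R) l : map snd (insert_p a l) = insert_desc (snd a) (map snd l).
Proof. induction l as [|b l IH]; simpl; auto. destruct (Rle_dec (snd b) (snd a)); simpl; auto. rewrite IH; auto. Qed.

Lemma sort_p_snd {A} (l : list (A * R)) : map snd (sort_p l) = sort_desc (map snd l).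
Proof. induction l; simpl; auto. rewrite insert_p_snd, IHl; auto. Qed.

Lemma insert_p_perm {A} (a : A * R) l : Permutation (a :: l) (insert_p a l).
Proof.
  induction l as [|b l IH]; simpl; auto. destruct (Rle_dec (snd b) (snd a)); auto.
  eapply perm_trans. apply perm_swap. constructor; auto.
Qed.

Lemma sort_p_perm {A} (l : list (A * R)) : Permutation l (sort_p l).
Proof. induction l; simpl; auto. eapply perm_trans. constructor; eauto. apply insert_p_perm. Qed.

Lemma insert_desc_perm a l : Permutation (a :: l) (insert_desc a l).
Proof.
  induction l as [|b l IH]; simpl; auto. destruct (Rle_dec b a); auto.
  eapply perm_trans. apply perm_swap. constructor; auto.
Qed.

Lemma sort_desc_perm l : Permutation l (sort_desc l).
Proof. induction l; simpl; auto. eapply perm_trans. constructor; eauto. apply insert_desc_perm. Qed.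

Definition GE (a b : R) : Prop := b <= a.

Lemma insert_desc_sorted a l : StronglySorted GE l -> StronglySorted GE (insert_desc a l).
Proof.
  induction l as [|b l IH]; intros H; simpl. repeat constructor.
  inversion H as [|? ? H1 H2]; subst.
  destruct (Rle_dec b a).
  - constructor; auto. constructor. unfold GE; auto.
    rewrite Forall_forall in *. intros y Hy. specialize (H2 y Hy). unfold GE in *; lra.
  - constructor; auto. rewrite Forall_forall in *. intros y Hy.
    apply (Permutation_in _ (Permutation_sym (insert_desc_perm a l))) in Hy.
    destruct Hy as [<-|Hy]; [unfold GE; lra|auto].
Qed.

Lemma sort_desc_sorted l : StronglySorted GE (sort_desc l).
Proof. induction l; simpl. constructor. apply insert_desc_sorted; auto. Qed.

Lemma SS_app (l : list R) a : StronglySorted Rle l -> Forall (fun y => y <= a) l ->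
  StronglySorted Rle (l ++ [a]).
Proof.
  induction l as [|b l IH]; intros H1 H2; simpl. repeat constructor.
  inversion H1; subst. inversion H2; subst. constructor; auto.
  apply Forall_app; split; auto.
Qed.

Lemma SS_rev l : StronglySorted GE l -> StronglySorted Rle (rev l).
Proof.
  induction l as [|a l IH]; intros H; simpl. constructor.
  inversion H; subst. apply SS_app; auto.
  rewrite Forall_forall in *. intros y Hy. apply H3. apply in_rev; auto.
Qed.

Lemma map_nth_seq' (l : list R) : map (fun j => nth j l 0) (seq 0 (length l)) = l.
Proof.
  induction l as [|a l IH]; simpl; auto. f_equal.
  rewrite <- seq_shift, map_map. simpl. exact IH.
Qed.

Lemma lsum_rev l : lsum (rev l) = lsum l.
Proof. apply lsum_perm. apply Permutation_sym, Permutation_rev. Qed.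

Lemma matvec_gs k d X (p : list R) (g : nat -> nat) :
  (forall r j, (r < k)%nat -> (j < d)%nat -> X r j = if Nat.eqb (g j) r then 1 else 0) ->
  entropy (matvec k d X p) = - SF (seq 0 k) (map (fun j => (g j, nth j p 0)) (seq 0 d)).
Proof.
  intros H. unfold entropy, matvec, SF. rewrite map_map. f_equal. unfold lsum. f_equal.
  apply map_ext_in. intros r Hr. apply in_seq in Hr. f_equal.
  unfold gs. rewrite map_map. unfold lsum. f_equal. apply map_ext_in. intros j Hj. apply in_seq in Hj.
  rewrite H by lia. simpl. destruct (Nat.eqb (g j) r); lra.
Qed.

Lemma entropy_pik k (p : list R) :
  entropy (pi_k k p) = - (xlogx (lsum (firstn (length p - k + 1) (sort_desc p)))
                          + lsum (map xlogx (skipn (length p - k + 1) (sort_desc p)))).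
Proof. reflexivity. Qed.

Fixpoint look (j : nat) (Z : list (nat * nat)) : nat :=
  match Z with
  | [] => 0%nat
  | (a, b) :: t => if Nat.eqb j a then b else look j t
  end.

Lemma look_in keys lab j b : NoDup keys -> In (j, b) (combine keys lab) -> look j (combine keys lab) = b.
Proof.
  revert lab; induction keys as [|a keys IH]; intros lab Hnd Hin; destruct lab as [|c lab]; simpl in *; try tauto.
  inversion Hnd; subst. destruct (Nat.eqb_spec j a).
  - subst. destruct Hin as [E|E]; [congruence|]. apply in_combine_l in E; contradiction.
  - destruct Hin as [E|E]; [congruence|]. apply IH; auto.
Qed.

Lemma look_range j Z : look j Z = 0%nat \/ In (look j Z) (map snd Z).
Proof.
  induction Z as [|[a b] Z IH]; simpl; auto. destruct (Nat.eqb j a); simpl; tauto.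
Qed.

Lemma combine_exists (keys lab : list nat) r : length keys = length lab -> In r lab ->
  exists j, In (j, r) (combine keys lab).
Proof.
  revert lab; induction keys as [|a keys IH]; intros lab Hl Hr; destruct lab as [|c lab]; simpl in *; try lia; try tauto.
  destruct Hr as [<-|Hr]. exists a; auto. destruct (IH lab ltac:(lia) Hr) as [j Hj]. exists j; auto.
Qed.



Lemma map_look (Q : list (nat * R)) lab : NoDup (map fst Q) -> length lab = length Q ->
  map (fun a => (look (fst a) (combine (map fst Q) lab), snd a)) Q = combine lab (map snd Q).
Proof.
  revert lab; induction Q as [|[a v] Q IH]; intros lab Hnd Hl; destruct lab as [|c lab]; simpl in *; try lia; auto.
  inversion Hnd; subst. rewrite Nat.eqb_refl. f_equal.
  rewrite <- IH by (auto; lia). apply map_ext_in. intros [a' v'] Hin. simpl.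
  destruct (Nat.eqb_spec a' a); auto. subst. exfalso. apply H1. apply in_map_iff. exists (a, v'); auto.
Qed.

Lemma combine_app' {A B} (a b : list A) (u v : list B) : length a = length u ->
  combine (a ++ b) (u ++ v) = combine a u ++ combine b v.
Proof.
  revert u; induction a; intros u H; destruct u; simpl in *; try lia; auto. rewrite IHa; auto.
Qed.

Lemma in_fst_combine {A B} (r : A) (a : list A) (b : list B) : In r (map fst (combine a b)) -> In r a.
Proof. intros H. apply in_map_iff in H as [[x y] [<- H]]. simpl. eapply in_combine_l; eauto. Qed.

Lemma gs_rep0 t n : length t = n -> gs 0 (combine (repeat 0%nat n) t) = lsum t.
Proof.
  revert n; induction t; intros n H; destruct n; simpl in *; try lia. reflexivity.
  rewrite gs_cons. simpl. rewrite IHt by lia. reflexivity.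
Qed.

Lemma SF_seq t c n : length t = n -> SF (seq c n) (combine (seq c n) t) = lsum (map xlogx t).
Proof.
  revert c n; induction t as [|x t IH]; intros c n H; destruct n; simpl in *; try lia. reflexivity.
  unfold SF; simpl. fold (SF (seq (S c) n) ((c, x) :: combine (seq (S c) n) t)).
  rewrite gs_cons. simpl. rewrite Nat.eqb_refl.
  rewrite gs_notin by (intros Hin; apply in_fst_combine, in_seq in Hin; lia).
  rewrite (SF_ext _ _ (combine (seq (S c) n) t)).
  2:{ intros r Hr. apply in_seq in Hr. rewrite gs_cons. simpl.
      rewrite (proj2 (Nat.eqb_neq c r)) by lia. lra. }
  rewrite IH by lia. rewrite Rplus_0_r. reflexivity.
Qed.

Lemma exist_part d k p : in_simplex d p -> (1 <= k)%nat -> (k <= d - 1)%nat ->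
  exists X, in_Dk k d X /\ entropy (matvec k d X p) = entropy (pi_k k p).
Proof.
  intros [Hlen [Hnn _]] Hk1 Hkd.
  set (m := (d - k + 1)%nat).
  set (P := map (fun j => (j, nth j p 0)) (seq 0 d)).
  set (Q := sort_p P).
  set (lab := repeat 0%nat m ++ seq 1 (k - 1)).
  set (Z := combine (map fst Q) lab).
  set (g := fun j => look j Z).
  exists (fun r j => if Nat.eqb (g j) r then 1 else 0).
  assert (HPQ : Permutation P Q) by apply sort_p_perm.
  assert (HfQ : Permutation (seq 0 d) (map fst Q)).
  { replace (seq 0 d) with (map fst P). apply Permutation_map; auto.
    unfold P. rewrite map_map. simpl. apply map_id. }
  assert (HND : NoDup (map fst Q)) by (eapply Permutation_NoDup; [exact HfQ|apply seq_NoDup]).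
  assert (HlenQ : length Q = d).
  { rewrite <- (Permutation_length HPQ). unfold P. rewrite length_map, length_seq. auto. }
  assert (Hlab : length lab = d).
  { unfold lab. rewrite length_app, repeat_length, length_seq. unfold m. lia. }
  assert (Hlabk : forall r, In r lab -> (r < k)%nat).
  { intros r Hr. unfold lab in Hr. apply in_app_or in Hr as [Hr|Hr].
    apply repeat_spec in Hr; lia. apply in_seq in Hr; lia. }
  assert (Hgk : forall j, (g j < k)%nat).
  { intros j. unfold g. destruct (look_range j Z) as [E|E]. rewrite E; lia.
    apply Hlabk. apply in_map_iff in E as [[a b] [Eb Hab]]. simpl in Eb. subst.
    unfold Z in Hab. eapply in_combine_r; eauto. }
  split.
  - split; [|split].
    + intros r j _ _. destruct (Nat.eqb (g j) r); auto.
    + intros j Hj. exists (g j). split; auto. rewrite Nat.eqb_refl. split; [lra|].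
      intros r' _ Hne. rewrite (proj2 (Nat.eqb_neq (g j) r')); auto.
    + intros r Hr. assert (Hin : In r lab).
      { unfold lab. apply in_or_app. destruct r.
        - left. replace m with (S (m - 1)) by (unfold m; lia). simpl; auto.
        - right. apply in_seq. lia. }
      destruct (combine_exists (map fst Q) lab r ltac:(rewrite length_map; lia) Hin) as [j Hj].
      exists j. split.
      * apply in_combine_l in Hj. apply (Permutation_in _ (Permutation_sym HfQ)) in Hj.
        apply in_seq in Hj. lia.
      * assert (g j = r) by (unfold g, Z; apply look_in; auto). rewrite H, Nat.eqb_refl. lra.
  - rewrite (matvec_gs _ _ _ _ g) by (intros; reflexivity).
    rewrite entropy_pik, Hlen. fold m.
    assert (HsP : map snd P = p).
    { unfold P. rewrite map_map. simpl. rewrite <- Hlen. apply map_nth_seq'. }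
    set (h := fun a : nat * R => (g (fst a), snd a)).
    replace (map (fun j => (g j, nth j p 0)) (seq 0 d)) with (map h P)
      by (unfold P, h; rewrite map_map; reflexivity).
    rewrite (SF_ext _ _ (map h Q)) by (intros; apply gs_perm, Permutation_map; auto).
    assert (E : map h Q = combine lab (map snd Q)).
    { unfold h, g, Z. apply map_look; auto; lia. }
    rewrite E. unfold Q. rewrite sort_p_snd, HsP.
    set (s := sort_desc p).
    assert (Hls : length s = d).
    { unfold s. rewrite <- (Permutation_length (sort_desc_perm p)); auto. }
    assert (Hf : length (firstn m s) = m) by (rewrite firstn_length_le; unfold m; lia).
    assert (Hsk : length (skipn m s) = (k - 1)%nat) by (rewrite length_skipn; unfold m; lia).
    rewrite <- (firstn_skipn m s) at 1. unfold lab. rewrite combine_app' by (rewrite repeat_length; auto).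
    replace (seq 0 k) with (0%nat :: seq 1 (k - 1)) by (replace k with (S (k - 1)) at 2 by lia; reflexivity).
    unfold SF at 1. simpl map. rewrite lsum_cons. fold (SF (seq 1 (k - 1)) (combine (repeat 0%nat m) (firstn m s) ++ combine (seq 1 (k - 1)) (skipn m s))).
    rewrite gs_app, gs_rep0 by auto.
    rewrite (gs_notin 0 (combine (seq 1 (k-1)) _)) by (intros Hin; apply in_fst_combine, in_seq in Hin; lia).
    rewrite (SF_ext _ _ (combine (seq 1 (k - 1)) (skipn m s))).
    2:{ intros r Hr. apply in_seq in Hr. rewrite gs_app, gs_notin. lra.
        intros Hin. apply in_fst_combine, repeat_spec in Hin. lia. }
    rewrite SF_seq by auto. rewrite Rplus_0_r. reflexivity.
Qed.

Lemma lower d k p X : in_simplex d p -> (1 <= k)%nat -> (k <= d - 1)%nat -> in_Dk k d X ->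
  entropy (pi_k k p) <= entropy (matvec k d X p).
Proof.
  intros [Hlen [Hnn _]] Hk1 Hkd [Hx01 [Hcol Hrow]].
  set (g := fun j => match find (fun r => if Req_EM_T (X r j) 0 then false else true) (seq 0 k) with
                    | Some r => r | None => 0%nat end).
  assert (Hg : forall j, (j < d)%nat -> (g j < k)%nat /\ X (g j) j <> 0 /\
                 forall r', (r' < k)%nat -> r' <> g j -> X r' j = 0).
  { intros j Hj. destruct (Hcol j Hj) as [r0 [Hr0 [Hnz Huniq]]].
    unfold g. destruct (find _ _) as [r|] eqn:Ef.
    - apply find_some in Ef as [Hin Hp]. apply in_seq in Hin. cbv beta in Hp.
      destruct (Req_EM_T (X r j) 0) as [_|Hne]; [discriminate|].
      assert (r = r0). { destruct (Nat.eq_dec r r0); auto. exfalso; apply Hne, Huniq; lia. }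
      subst. split; [lia|split; auto].
    - pose proof (find_none _ _ Ef r0 ltac:(apply in_seq; lia)) as Hp. cbv beta in Hp.
      destruct (Req_EM_T (X r0 j) 0); [contradiction|discriminate]. }
  assert (HX : forall r j, (r < k)%nat -> (j < d)%nat -> X r j = if Nat.eqb (g j) r then 1 else 0).
  { intros r j Hr Hj. destruct (Hg j Hj) as [Hgk [Hnz Hu]].
    destruct (Nat.eqb_spec (g j) r).
    - subst. destruct (Hx01 (g j) j Hr Hj); [contradiction|auto].
    - apply Hu; auto. }
  rewrite (matvec_gs _ _ _ _ g HX), entropy_pik.
  set (Lg := map (fun j => (g j, nth j p 0)) (seq 0 d)).
  assert (HsndLg : map snd Lg = p).
  { unfold Lg. rewrite map_map. simpl. rewrite <- Hlen. apply map_nth_seq'. }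
  set (L := rev (sort_p Lg)).
  assert (HP : Permutation Lg L).
  { eapply perm_trans. apply sort_p_perm. apply Permutation_rev. }
  rewrite (SF_ext _ Lg L) by (intros; apply gs_perm; auto).
  assert (HsndL : map snd L = rev (sort_desc p)).
  { unfold L. rewrite map_rev, sort_p_snd, HsndLg. auto. }
  assert (HinL : forall a, In a L -> exists j, (j < d)%nat /\ a = (g j, nth j p 0)).
  { intros a Ha. apply (Permutation_in _ (Permutation_sym HP)) in Ha.
    unfold Lg in Ha. apply in_map_iff in Ha as [j [<- Hj]]. apply in_seq in Hj. exists j; split; auto; lia. }
  assert (K := KEY L (seq 0 k) (seq_NoDup _ _)).
  rewrite length_seq, HsndL in K.
  rewrite skipn_rev, firstn_rev, lsum_rev, map_rev, lsum_rev in K.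
  assert (Hls : length (sort_desc p) = d).
  { rewrite <- (Permutation_length (sort_desc_perm p)); auto. }
  rewrite Hls in K. rewrite Hlen.
  replace (d - (k - 1))%nat with (d - k + 1)%nat in K by lia.
  enough (SF (seq 0 k) L <= xlogx (lsum (firstn (d - k + 1) (sort_desc p))) +
            lsum (map xlogx (skipn (d - k + 1) (sort_desc p)))) by lra.
  apply K.
  - intros a Ha. destruct (HinL a Ha) as [j [Hj ->]]. simpl. apply in_seq. destruct (Hg j Hj). lia.
  - intros r Hr. apply in_seq in Hr. destruct (Hrow r ltac:(lia)) as [j [Hj Hnz]].
    assert (g j = r).
    { destruct (Hg j Hj) as [_ [_ Hu]]. destruct (Nat.eq_dec r (g j)); auto. exfalso; apply Hnz, Hu; lia. }
    apply in_map_iff. exists (g j, nth j p 0). split; auto.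
    apply (Permutation_in _ HP). unfold Lg. apply in_map_iff. exists j; split; auto. apply in_seq; lia.
  - rewrite Forall_forall in *. intros v Hv. apply in_rev in Hv.
    apply (Permutation_in _ (Permutation_sym (sort_desc_perm p))) in Hv. auto.
  - apply SS_rev, sort_desc_sorted.
Qed.

Theorem mainTheorem4 (d k : nat) (p : list R) :
  in_simplex d p -> (1 <= k)%nat -> (k <= d - 1)%nat ->
  (exists X, in_Dk k d X /\ entropy (matvec k d X p) = entropy (pi_k k p)) /\
  (forall X, in_Dk k d X -> entropy (pi_k k p) <= entropy (matvec k d X p)).
Proof.
  intros H1 H2 H3. split.
  - apply exist_part; auto.
  - intros X HX. apply lower; auto.
Qed.
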